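(* Let $X$ be an infinite dimensional real Banach space. Then there is a closed convex set $K$ contained in the open unit ball $\{x\in X:\|x\|<1\}$ of $X$ such that $\sup\{\|x\|: x\in K\}=1$. *)

(* Defs.v *)
From Stdlib Require Import Reals.
Open Scope R_scope.

Record BanachSpace := {
  carrier :> Type;
  vzero : carrier;
  vadd : carrier -> carrier -> carrier;
  vopp : carrier -> carrier;
  vscal : R -> carrier -> carrier;
  vnorm : carrier -> R;
  vadd_assoc : forall x y z, vadd x (vadd y z) = vadd (vadd x y) z;
  vadd_comm : forall x y, vadd x y = vadd y x;
  vadd_0 : forall x, vadd x vzero = x;
  vadd_opp : forall x, vadd x (vopp x) = vzero;
  vscal_1 : forall x, vscal 1 x = x;
  vscal_assoc : forall a b x, vscal a (vscal b x) = vscal (a * b) x;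
  vscal_distr_v : forall a x y, vscal a (vadd x y) = vadd (vscal a x) (vscal a y);
  vscal_distr_s : forall a b x, vscal (a + b) x = vadd (vscal a x) (vscal b x);
  vnorm_eq0 : forall x, vnorm x = 0 -> x = vzero;
  vnorm_scal : forall a x, vnorm (vscal a x) = Rabs a * vnorm x;
  vnorm_triangle : forall x y, vnorm (vadd x y) <= vnorm x + vnorm y;
  vcomplete : forall u : nat -> carrier,
    (forall eps, eps > 0 -> exists N, forall n m, (n >= N)%nat -> (m >= N)%nat ->
       vnorm (vadd (u n) (vopp (u m))) < eps) ->
    exists l, forall eps, eps > 0 -> exists N, forall n, (n >= N)%nat ->
       vnorm (vadd (u n) (vopp l)) < eps
}.

Arguments vzero {_}. Arguments vadd {_}. Arguments vopp {_}.
Arguments vscal {_}. Arguments vnorm {_}.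

Fixpoint lin_comb (X : BanachSpace) (c : nat -> R) (v : nat -> X) (n : nat) : X :=
  match n with
  | O => vzero
  | S k => vadd (lin_comb X c v k) (vscal (c k) (v k))
  end.

Definition infinite_dimensional (X : BanachSpace) : Prop :=
  forall n : nat, exists v : nat -> X,
    forall c : nat -> R, lin_comb X c v n = vzero ->
      forall i, (i < n)%nat -> c i = 0.

Definition converges_to (X : BanachSpace) (u : nat -> X) (l : X) : Prop :=
  forall eps, eps > 0 -> exists N, forall n, (n >= N)%nat ->
    vnorm (vadd (u n) (vopp l)) < eps.

(* closed = sequentially closed (equivalent in metric spaces) *)
Definition is_closed (X : BanachSpace) (K : X -> Prop) : Prop :=
  forall (u : nat -> X) (l : X), (forall n, K (u n)) -> converges_to X u l -> K l.

Definition is_convex (X : BanachSpace) (K : X -> Prop) : Prop :=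
  forall x y t, K x -> K y -> 0 <= t <= 1 ->
    K (vadd (vscal t x) (vscal (1 - t) y)).

(* Main.v *)
Require Import Defs.
From Stdlib Require Import Reals Lra Lia Psatz Arith ZArith Classical ClassicalEpsilon Cantor.
Open Scope R_scope.

Arguments vadd_assoc {_}. Arguments vadd_comm {_}. Arguments vadd_0 {_}.
Arguments vadd_opp {_}. Arguments vscal_1 {_}. Arguments vscal_assoc {_}.
Arguments vscal_distr_v {_}. Arguments vscal_distr_s {_}. Arguments vnorm_eq0 {_}.
Arguments vnorm_scal {_}. Arguments vnorm_triangle {_}.

Definition vsub {X : BanachSpace} (x y : X) : X := vadd x (vopp y).

Lemma vadd_0l {X : BanachSpace} (x : X) : vadd vzero x = x.
Proof. rewrite vadd_comm; apply vadd_0. Qed.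

Lemma vadd_opp_l {X : BanachSpace} (x : X) : vadd (vopp x) x = vzero.
Proof. rewrite vadd_comm; apply vadd_opp. Qed.

Lemma vadd_cancel_l {X : BanachSpace} (a b c : X) : vadd a b = vadd a c -> b = c.
Proof.
  intros H. rewrite <- (vadd_0l b), <- (vadd_0l c), <- (vadd_opp_l a),
    <- !vadd_assoc, H. reflexivity.
Qed.

Lemma vscal_0l {X : BanachSpace} (x : X) : vscal 0 x = vzero.
Proof.
  apply (vadd_cancel_l (vscal 0 x)). rewrite <- vscal_distr_s, Rplus_0_r, vadd_0.
  reflexivity.
Qed.

Lemma vscal_0r {X : BanachSpace} (a : R) : vscal a (@vzero X) = vzero.
Proof.
  apply (vadd_cancel_l (vscal a vzero)). rewrite <- vscal_distr_v, !vadd_0.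
  reflexivity.
Qed.

Lemma vopp_scal {X : BanachSpace} (x : X) : vopp x = vscal (-1) x.
Proof.
  apply (vadd_cancel_l x). rewrite vadd_opp.
  rewrite <- (vscal_1 x) at 1. rewrite <- vscal_distr_s.
  replace (1 + -1) with 0 by ring. rewrite vscal_0l. reflexivity.
Qed.

Lemma vnorm_0 {X : BanachSpace} : vnorm (@vzero X) = 0.
Proof. rewrite <- (vscal_0l (@vzero X)), vnorm_scal, Rabs_R0. ring. Qed.

Lemma vnorm_opp {X : BanachSpace} (x : X) : vnorm (vopp x) = vnorm x.
Proof.
  rewrite vopp_scal, vnorm_scal.
  replace (Rabs (-1)) with 1 by (unfold Rabs; destruct Rcase_abs; lra). ring.
Qed.

Lemma vnorm_nonneg {X : BanachSpace} (x : X) : 0 <= vnorm x.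
Proof.
  pose proof (vnorm_triangle x (vopp x)) as H.
  rewrite vadd_opp, vnorm_0, vnorm_opp in H. lra.
Qed.

Lemma vopp_add {X : BanachSpace} (a b : X) : vopp (vadd a b) = vadd (vopp a) (vopp b).
Proof. rewrite !vopp_scal, vscal_distr_v. reflexivity. Qed.

Lemma vopp_opp {X : BanachSpace} (a : X) : vopp (vopp a) = a.
Proof. rewrite !vopp_scal, vscal_assoc. replace (-1 * -1) with 1 by ring. apply vscal_1. Qed.

Lemma vadd_swap4 {X : BanachSpace} (a b c d : X) :
  vadd (vadd a b) (vadd c d) = vadd (vadd a c) (vadd b d).
Proof.
  rewrite <- !vadd_assoc. f_equal. rewrite !vadd_assoc. f_equal. apply vadd_comm.
Qed.

Lemma vadd_rcomm {X : BanachSpace} (a b c : X) :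
  vadd (vadd a b) c = vadd (vadd a c) b.
Proof. rewrite <- !vadd_assoc. f_equal. apply vadd_comm. Qed.

Lemma vsub_self {X : BanachSpace} (x : X) : vsub x x = vzero.
Proof. apply vadd_opp. Qed.

Lemma vopp_0 {X : BanachSpace} : vopp (@vzero X) = vzero.
Proof. rewrite vopp_scal. apply vscal_0r. Qed.

Lemma vsub_0r {X : BanachSpace} (x : X) : vsub x vzero = x.
Proof. unfold vsub. rewrite vopp_0. apply vadd_0. Qed.

Lemma vsub_split {X : BanachSpace} (x y v : X) : vsub x v = vadd (vsub x y) (vsub y v).
Proof.
  unfold vsub. rewrite <- vadd_assoc. f_equal.
  rewrite vadd_assoc, vadd_opp_l, vadd_0l. reflexivity.
Qed.

Lemma norm_sub_tri {X : BanachSpace} (x y v : X) :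
  vnorm (vsub x v) <= vnorm (vsub x y) + vnorm (vsub y v).
Proof. rewrite (vsub_split x y v). apply vnorm_triangle. Qed.

Lemma vsub_anti {X : BanachSpace} (x y : X) : vsub x y = vopp (vsub y x).
Proof. unfold vsub. rewrite vopp_add, vopp_opp. apply vadd_comm. Qed.

Lemma norm_sub_sym {X : BanachSpace} (x y : X) : vnorm (vsub x y) = vnorm (vsub y x).
Proof. rewrite vsub_anti, vnorm_opp. reflexivity. Qed.

Lemma vadd_sub {X : BanachSpace} (x y : X) : vadd y (vsub x y) = x.
Proof.
  unfold vsub. rewrite vadd_comm, <- vadd_assoc, vadd_opp_l. apply vadd_0.
Qed.

Lemma norm_le_sub {X : BanachSpace} (x y : X) : vnorm x <= vnorm y + vnorm (vsub x y).
Proof. rewrite <- (vadd_sub x y) at 1. apply vnorm_triangle. Qed.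

Lemma vsub_add {X : BanachSpace} (a b c d : X) :
  vsub (vadd a b) (vadd c d) = vadd (vsub a c) (vsub b d).
Proof. unfold vsub. rewrite vopp_add, vadd_swap4. reflexivity. Qed.

Lemma vsub_scal {X : BanachSpace} (t : R) (a b : X) :
  vsub (vscal t a) (vscal t b) = vscal t (vsub a b).
Proof.
  unfold vsub. rewrite !vopp_scal, vscal_distr_v, !vscal_assoc.
  f_equal. f_equal. ring.
Qed.

Lemma vsub_scal_diff {X : BanachSpace} (a q : R) (x r : X) :
  vsub (vscal a x) (vscal q r) = vadd (vscal a (vsub x r)) (vscal (a - q) r).
Proof.
  unfold vsub. rewrite !vopp_scal, vscal_distr_v, !vscal_assoc.
  rewrite <- vadd_assoc. f_equal. rewrite <- vscal_distr_s. f_equal. ring.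
Qed.

Lemma vadd_solve {X : BanachSpace} (a b c : X) : vadd a b = c -> b = vsub c a.
Proof.
  intros <-. unfold vsub. rewrite vadd_rcomm, vadd_opp, vadd_0l. reflexivity.
Qed.

Lemma norm_convex {X : BanachSpace} (t s : R) (x y : X) : 0 <= t -> 0 <= s ->
  vnorm (vadd (vscal t x) (vscal s y)) <= t * vnorm x + s * vnorm y.
Proof.
  intros Ht Hs. eapply Rle_trans; [apply vnorm_triangle|].
  rewrite !vnorm_scal, !Rabs_pos_eq by lra. lra.
Qed.

Lemma vnorm_pos {X : BanachSpace} (x : X) : x <> vzero -> 0 < vnorm x.
Proof.
  intros H. destruct (vnorm_nonneg x) as [H1|H1]; auto.
  exfalso; apply H, vnorm_eq0; auto.
Qed.


Definition subsp {X : BanachSpace} (M : X -> Prop) : Prop :=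
  M vzero /\ (forall x y, M x -> M y -> M (vadd x y)) /\ (forall a x, M x -> M (vscal a x)).

Definition lin_on {X : BanachSpace} (M : X -> Prop) (f : X -> R) : Prop :=
  (forall x y, M x -> M y -> f (vadd x y) = f x + f y) /\
  (forall a x, M x -> f (vscal a x) = a * f x).

Definition bnd_on {X : BanachSpace} (M : X -> Prop) (f : X -> R) : Prop :=
  forall x, M x -> f x <= vnorm x.

Definition ext {X : BanachSpace} (M : X -> Prop) (z : X) : X -> Prop :=
  fun x => exists m t, M m /\ x = vadd m (vscal t z).

Lemma lin_0 {X : BanachSpace} (M : X -> Prop) f : subsp M -> lin_on M f -> f vzero = 0.
Proof.
  intros [H0 _] [_ Hs]. rewrite <- (vscal_0l (@vzero X)), Hs; auto. ring.
Qed.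

Lemma lin_opp {X : BanachSpace} (M : X -> Prop) f x : lin_on M f -> M x -> f (vopp x) = - f x.
Proof. intros [_ Hs] Hx. rewrite vopp_scal, Hs; auto. ring. Qed.

Lemma lin_sub {X : BanachSpace} (M : X -> Prop) f x y : subsp M -> lin_on M f -> M x -> M y ->
  f (vsub x y) = f x - f y.
Proof.
  intros [H0 [Ha Hs]] Hl Hx Hy. unfold vsub. pose proof Hl as [Hla Hls].
  rewrite Hla by (auto; rewrite vopp_scal; auto).
  rewrite (lin_opp M f y Hl Hy). ring.
Qed.

Lemma subsp_sub {X : BanachSpace} (M : X -> Prop) x y : subsp M -> M x -> M y -> M (vsub x y).
Proof. intros [H0 [Ha Hs]] Hx Hy. unfold vsub. rewrite vopp_scal. auto. Qed.

Lemma abs_bnd {X : BanachSpace} (M : X -> Prop) f x : subsp M -> lin_on M f -> bnd_on M f -> M x ->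
  Rabs (f x) <= vnorm x.
Proof.
  intros HM Hl Hb Hx. unfold Rabs. destruct Rcase_abs.
  - rewrite <- (lin_opp M f x), <- (vnorm_opp x); auto. apply Hb.
    destruct HM as [_ [_ Hs]]. rewrite vopp_scal; auto.
  - auto.
Qed.

Lemma ext_subsp {X : BanachSpace} (M : X -> Prop) z : subsp M -> subsp (ext M z).
Proof.
  intros [H0 [Ha Hs]]. split; [|split].
  - exists vzero, 0. split; auto. rewrite vscal_0l, vadd_0. reflexivity.
  - intros x y [m1 [t1 [Hm1 ->]]] [m2 [t2 [Hm2 ->]]].
    exists (vadd m1 m2), (t1 + t2). split; auto.
    rewrite vadd_swap4, vscal_distr_s. reflexivity.
  - intros a x [m [t [Hm ->]]]. exists (vscal a m), (a * t). split; auto.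
    rewrite vscal_distr_v, vscal_assoc. reflexivity.
Qed.

Lemma ext_incl {X : BanachSpace} (M : X -> Prop) z m : M m -> ext M z m.
Proof. intros H. exists m, 0. split; auto. rewrite vscal_0l, vadd_0. reflexivity. Qed.

Lemma ext_z {X : BanachSpace} (M : X -> Prop) z : M vzero -> ext M z z.
Proof. intros H. exists vzero, 1. split; auto. rewrite vscal_1, vadd_0l. reflexivity. Qed.

Lemma decomp_unique {X : BanachSpace} (M : X -> Prop) z m1 m2 t1 t2 :
  subsp M -> ~ M z -> M m1 -> M m2 -> vadd m1 (vscal t1 z) = vadd m2 (vscal t2 z) ->
  m1 = m2 /\ t1 = t2.
Proof.
  intros HM Hz H1 H2 He. destruct (Req_dec t1 t2) as [Ht|Ht].
  - subst t2. split; auto. rewrite !(vadd_comm _ (vscal t1 z)) in He.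
    eapply vadd_cancel_l; eauto.
  - exfalso. apply Hz.
    assert (Hk : vscal (t1 - t2) z = vsub m2 m1).
    { unfold Rminus. rewrite vscal_distr_s.
      apply vadd_solve in He. rewrite He.
      unfold vsub. rewrite vadd_rcomm, <- (vadd_assoc m2 (vscal t2 z)), <- vscal_distr_s.
      replace (t2 + - t2) with 0 by ring. rewrite vscal_0l, vadd_0. reflexivity. }
    assert (Hz' : z = vscal (/ (t1 - t2)) (vsub m2 m1)).
    { rewrite <- Hk, vscal_assoc, Rinv_l, vscal_1; auto. lra. }
    rewrite Hz'. destruct HM as [H0 [Ha Hs]]. apply Hs. apply subsp_sub; auto. split; auto.
Qed.

Definition ext_fun {X : BanachSpace} (M : X -> Prop) (z : X) (f : X -> R) (c : R) (x : X) : R :=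
  match excluded_middle_informative
          (exists p : X * R, M (fst p) /\ x = vadd (fst p) (vscal (snd p) z)) with
  | left H => let p := proj1_sig (constructive_indefinite_description _ H) in
              f (fst p) + snd p * c
  | right _ => 0
  end.

Lemma ext_fun_eq {X : BanachSpace} (M : X -> Prop) z f c m t :
  subsp M -> ~ M z -> M m -> ext_fun M z f c (vadd m (vscal t z)) = f m + t * c.
Proof.
  intros HM Hz Hm. unfold ext_fun.
  destruct excluded_middle_informative as [H|H].
  - destruct constructive_indefinite_description as [[m' t'] [Hm' He]]. simpl in *.
    destruct (decomp_unique M z m m' t t') as [-> ->]; auto.
  - exfalso. apply H. exists (m, t). simpl. auto.
Qed.

Lemma hb_step {X : BanachSpace} (M : X -> Prop) f z c :
  subsp M -> lin_on M f -> bnd_on M f ->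
  (forall m, M m -> f m - vnorm (vsub m z) <= c) ->
  (forall m, M m -> c <= vnorm (vadd m z) - f m) ->
  exists g, lin_on (ext M z) g /\ bnd_on (ext M z) g /\ (forall m, M m -> g m = f m) /\ g z = c.
Proof.
  intros HM Hl Hb Hc1 Hc2.
  destruct (classic (M z)) as [Hz|Hz].
  -
    assert (Hsub : forall x, ext M z x -> M x).
    { intros x [m [t [Hm ->]]]. destruct HM as [H0 [Ha Hs]]. auto. }
    exists f. split; [|split; [|split]].
    + destruct Hl as [Hla Hls]. split; intros; [apply Hla|apply Hls]; auto.
    + intros x Hx. apply Hb; auto.
    + auto.
    + pose proof (Hc1 z Hz) as A. rewrite vsub_self, vnorm_0 in A.
      assert (Hoz : M (vopp z)) by (destruct HM as [_ [_ Hs]]; rewrite vopp_scal; auto).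
      pose proof (Hc2 (vopp z) Hoz) as B. rewrite vadd_opp_l, vnorm_0 in B.
      rewrite (lin_opp M f z) in B; auto. lra.
  - exists (ext_fun M z f c).
    pose proof HM as [H0 [Ha Hs]].
    split; [split|split; [|split]].
    + intros x y [m1 [t1 [Hm1 ->]]] [m2 [t2 [Hm2 ->]]].
      rewrite vadd_swap4, <- vscal_distr_s, !ext_fun_eq; auto.
      destruct Hl as [Hla _]. rewrite Hla; auto. ring.
    + intros a x [m [t [Hm ->]]].
      rewrite vscal_distr_v, vscal_assoc, !ext_fun_eq; auto.
      destruct Hl as [_ Hls]. rewrite Hls; auto. ring.
    + intros x [m [t [Hm ->]]]. rewrite ext_fun_eq; auto.
      destruct (Rtotal_order t 0) as [Ht|[Ht|Ht]].
      * set (s := - t). assert (Hs0 : 0 < s) by (unfold s; lra).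
        assert (Hm' : M (vscal (/ s) m)) by auto.
        pose proof (Hc1 _ Hm') as A.
        destruct Hl as [_ Hls]. rewrite Hls in A; auto.
        assert (E : vadd m (vscal t z) = vscal s (vsub (vscal (/ s) m) z)).
        { unfold vsub. rewrite vopp_scal, vscal_distr_v, !vscal_assoc, Rinv_r by lra.
          rewrite vscal_1. f_equal. f_equal. unfold s; ring. }
        rewrite E, vnorm_scal, Rabs_pos_eq by lra.
        apply (Rmult_le_compat_l s) in A; [|lra].
        replace (s * (/ s * f m - vnorm (vsub (vscal (/ s) m) z))) with
          (f m - s * vnorm (vsub (vscal (/ s) m) z)) in A
          by (field; lra).
        unfold s in *. lra.
      * subst t. rewrite vscal_0l, vadd_0. rewrite Rmult_0_l, Rplus_0_r. auto.
      * assert (Hm' : M (vscal (/ t) m)) by auto.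
        pose proof (Hc2 _ Hm') as A.
        destruct Hl as [_ Hls]. rewrite Hls in A; auto.
        assert (E : vadd m (vscal t z) = vscal t (vadd (vscal (/ t) m) z)).
        { rewrite vscal_distr_v, !vscal_assoc, Rinv_r by lra. rewrite vscal_1. reflexivity. }
        rewrite E, vnorm_scal, Rabs_pos_eq by lra.
        apply (Rmult_le_compat_l t) in A; [|lra].
        replace (t * (vnorm (vadd (vscal (/ t) m) z) - / t * f m)) with
          (t * vnorm (vadd (vscal (/ t) m) z) - f m) in A by (field; lra).
        lra.
    + intros m Hm. rewrite <- (vadd_0 m), <- (vscal_0l z), ext_fun_eq; auto.
      rewrite vscal_0l, vadd_0. ring.
    + pose proof (ext_fun_eq M z f c vzero 1 HM Hz H0) as E.
      rewrite vscal_1, vadd_0l in E. rewrite E, (lin_0 M f); auto. ring.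
Qed.

Lemma hb_c {X : BanachSpace} (M : X -> Prop) f z :
  subsp M -> lin_on M f -> bnd_on M f ->
  exists c, (forall m, M m -> f m - vnorm (vsub m z) <= c) /\
            (forall m, M m -> c <= vnorm (vadd m z) - f m).
Proof.
  intros HM Hl Hb.
  assert (Key : forall m m', M m -> M m' -> f m - vnorm (vsub m z) <= vnorm (vadd m' z) - f m').
  { intros m m' Hm Hm'. pose proof HM as [H0 [Ha Hs]].
    assert (E : vadd m m' = vadd (vsub m z) (vadd m' z)).
    { unfold vsub. rewrite vadd_swap4, vadd_opp_l, vadd_0. reflexivity. }
    pose proof (Hb _ (Ha _ _ Hm Hm')) as B. destruct Hl as [Hla _].
    rewrite Hla in B; auto. rewrite E in B.
    pose proof (vnorm_triangle (vsub m z) (vadd m' z)). lra. }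
  set (E := fun r => exists m, M m /\ r = f m - vnorm (vsub m z)).
  assert (Hb0 : bound E).
  { exists (vnorm (vadd vzero z) - f vzero). intros r [m [Hm ->]].
    apply Key; auto. destruct HM; auto. }
  assert (Hne : exists r, E r).
  { exists (f vzero - vnorm (vsub vzero z)). exists vzero. split; auto. destruct HM; auto. }
  destruct (completeness E Hb0 Hne) as [c [Hub Hl0]].
  exists c. split.
  - intros m Hm. apply Hub. exists m. auto.
  - intros m' Hm'. apply Hl0. intros r [m [Hm ->]]. apply Key; auto.
Qed.


Inductive Vspan {X : BanachSpace} (gen : nat -> X) : X -> Prop :=
| Vsp0 : Vspan gen vzero
| Vspg j : Vspan gen (gen j)
| Vspa x y : Vspan gen x -> Vspan gen y -> Vspan gen (vadd x y)
| Vsps a x : Vspan gen x -> Vspan gen (vscal a x).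

Lemma Vspan_subsp {X : BanachSpace} (gen : nat -> X) : subsp (Vspan gen).
Proof. split; [constructor|split; intros; constructor; auto]. Qed.

Definition zseq {X : BanachSpace} (gen : nat -> X) (d : X) (j : nat) : X :=
  match j with O => d | S i => gen i end.

Fixpoint Msp {X : BanachSpace} (gen : nat -> X) (d : X) (k : nat) : X -> Prop :=
  match k with
  | O => fun x => x = vzero
  | S j => ext (Msp gen d j) (zseq gen d j)
  end.

Lemma Msp_subsp {X : BanachSpace} gen (d : X) k : subsp (Msp gen d k).
Proof.
  induction k as [|k IH]; simpl.
  - split; [reflexivity|split].
    + intros x y -> ->. apply vadd_0.
    + intros a x ->. apply vscal_0r.
  - apply ext_subsp; auto.
Qed.

Lemma Msp_mono {X : BanachSpace} gen (d : X) j k x : (j <= k)%nat -> Msp gen d j x -> Msp gen d k x.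
Proof.
  induction 1; auto. intros Hx. simpl. apply ext_incl. auto.
Qed.

Definition good {X : BanachSpace} gen (d : X) k f :=
  lin_on (Msp gen d k) f /\ bnd_on (Msp gen d k) f.

Lemma chain_step {X : BanachSpace} gen (d : X) k f : good gen d k f ->
  exists g, good gen d (S k) g /\ (forall x, Msp gen d k x -> g x = f x) /\
            (k = O -> g d = vnorm d).
Proof.
  intros [Hl Hb]. pose proof (Msp_subsp gen d k) as HM.
  destruct k as [|k].
  - destruct (hb_step (Msp gen d 0) f d (vnorm d)) as [g [Hgl [Hgb [Hga Hgz]]]]; auto.
    + intros m Hm. simpl in Hm. subst m. rewrite (lin_0 _ f HM Hl).
      pose proof (vnorm_nonneg (vsub vzero d)). pose proof (vnorm_nonneg d). lra.
    + intros m Hm. simpl in Hm. subst m. rewrite (lin_0 _ f HM Hl), vadd_0l. lra.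
    + exists g. split; [split|split]; auto.
  - destruct (hb_c (Msp gen d (S k)) f (zseq gen d (S k))) as [c [Hc1 Hc2]]; auto.
    destruct (hb_step (Msp gen d (S k)) f (zseq gen d (S k)) c) as [g [Hgl [Hgb [Hga Hgz]]]]; auto.
    exists g. split; [split|split]; auto. discriminate.
Qed.

Lemma good0 {X : BanachSpace} gen (d : X) : good gen d O (fun _ => 0).
Proof.
  split; [split|].
  - intros; ring.
  - intros; ring.
  - intros x _. apply vnorm_nonneg.
Qed.

Fixpoint hseq {X : BanachSpace} gen (d : X) (k : nat) : {f : X -> R | good gen d k f} :=
  match k with
  | O => exist _ (fun _ => 0) (good0 gen d)
  | S j =>
    let s := hseq gen d j in
    let H := constructive_indefinite_description _ (chain_step gen d j (proj1_sig s) (proj2_sig s)) in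
    exist _ (proj1_sig H) (proj1 (proj2_sig H))
  end.

Definition hf {X : BanachSpace} gen (d : X) k := proj1_sig (hseq gen d k).

Lemma hf_good {X : BanachSpace} gen (d : X) k : good gen d k (hf gen d k).
Proof. unfold hf. apply proj2_sig. Qed.

Lemma hf_S {X : BanachSpace} gen (d : X) k :
  (forall x, Msp gen d k x -> hf gen d (S k) x = hf gen d k x) /\
  (k = O -> hf gen d (S k) d = vnorm d).
Proof.
  unfold hf. cbn [hseq].
  destruct (constructive_indefinite_description _ _) as [g [Hg [Ha H0]]]. simpl. auto.
Qed.

Lemma hf_agree {X : BanachSpace} gen (d : X) j k x : (j <= k)%nat -> Msp gen d j x ->
  hf gen d k x = hf gen d j x.
Proof.
  induction 1; auto. intros Hx. rewrite (proj1 (hf_S gen d m)); auto.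
  apply (Msp_mono gen d j m); auto.
Qed.

Definition Phi {X : BanachSpace} gen (d : X) (x : X) : R :=
  match excluded_middle_informative (exists k, Msp gen d k x) with
  | left H => hf gen d (proj1_sig (constructive_indefinite_description _ H)) x
  | right _ => 0
  end.

Lemma Phi_eq {X : BanachSpace} gen (d : X) k x : Msp gen d k x -> Phi gen d x = hf gen d k x.
Proof.
  intros Hx. unfold Phi. destruct excluded_middle_informative as [H|H].
  - destruct constructive_indefinite_description as [j Hj]. simpl.
    destruct (le_le_S_dec j k) as [Hjk|Hjk].
    + symmetry. apply hf_agree; auto.
    + apply hf_agree; auto. lia.
  - exfalso; apply H; eauto.
Qed.

Lemma Vspan_Msp {X : BanachSpace} gen (d : X) x : Vspan gen x -> exists k, Msp gen d k x.
Proof.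
  induction 1.
  - exists O. reflexivity.
  - exists (S (S j)). apply (ext_z (Msp gen d (S j)) (gen j)). apply (Msp_subsp gen d (S j)).
  - destruct IHVspan1 as [k1 H1], IHVspan2 as [k2 H2]. exists (max k1 k2).
    pose proof (Msp_subsp gen d (max k1 k2)) as [_ [Ha _]]. apply Ha.
    + apply (Msp_mono gen d k1); auto; lia.
    + apply (Msp_mono gen d k2); auto; lia.
  - destruct IHVspan as [k H1]. exists k. pose proof (Msp_subsp gen d k) as [_ [_ Hs]]. auto.
Qed.

Lemma HB {X : BanachSpace} (gen : nat -> X) (d : X) :
  exists f, lin_on (Vspan gen) f /\ bnd_on (Vspan gen) f /\ f d = vnorm d.
Proof.
  exists (Phi gen d). split; [split|split].
  - intros x y Hx Hy. destruct (Vspan_Msp gen d x Hx) as [k1 H1].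
    destruct (Vspan_Msp gen d y Hy) as [k2 H2].
    assert (H1' : Msp gen d (max k1 k2) x) by (apply (Msp_mono gen d k1); auto; lia).
    assert (H2' : Msp gen d (max k1 k2) y) by (apply (Msp_mono gen d k2); auto; lia).
    pose proof (Msp_subsp gen d (max k1 k2)) as [_ [Ha _]].
    rewrite !(Phi_eq gen d (max k1 k2)); auto.
    apply (hf_good gen d (max k1 k2)); auto.
  - intros a x Hx. destruct (Vspan_Msp gen d x Hx) as [k H1].
    pose proof (Msp_subsp gen d k) as [_ [_ Hs]].
    rewrite !(Phi_eq gen d k); auto. apply (hf_good gen d k); auto.
  - intros x Hx. destruct (Vspan_Msp gen d x Hx) as [k H1].
    rewrite (Phi_eq gen d k); auto. apply (hf_good gen d k); auto.
  - assert (Hd : Msp gen d (S O) d) by (apply ext_z; reflexivity).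
    rewrite (Phi_eq gen d (S O)); auto. apply (proj2 (hf_S gen d O)). reflexivity.
Qed.


Lemma sum_zero (N : nat) : sum_f_R0 (fun _ => 0) N = 0.
Proof. rewrite sum_cte. ring. Qed.

Lemma homog : forall m (A : nat -> nat -> R), exists c : nat -> R,
  (exists i, (i <= m)%nat /\ c i <> 0) /\
  forall j, (j < m)%nat -> sum_f_R0 (fun i => A j i * c i) m = 0.
Proof.
  induction m as [|m IH]; intros A.
  - exists (fun _ => 1). split.
    + exists O. split; [lia|lra].
    + intros j Hj. lia.
  - destruct (classic (exists r, (r < S m)%nat /\ A r (S m) <> 0)) as [[r [Hr Hp]]|Hno].
    + set (rm := fun j => if Nat.eq_dec j r then m else j).
      set (B := fun j i => A (rm j) i - A (rm j) (S m) / A r (S m) * A r i).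
      destruct (IH B) as [c' [[i0 [Hi0 Hc0]] Hc']].
      set (sr := sum_f_R0 (fun i => A r i * c' i) m).
      exists (fun i => if Nat.eq_dec i (S m) then - sr / A r (S m) else c' i).
      split.
      * exists i0. split; [lia|]. destruct (Nat.eq_dec i0 (S m)); [lia|auto].
      * intros j Hj. rewrite tech5. cbv beta.
        destruct (Nat.eq_dec (S m) (S m)) as [_|]; [|lia].
        rewrite (sum_eq _ (fun i => A j i * c' i)).
        2:{ intros i Hi. destruct (Nat.eq_dec i (S m)); [lia|auto]. }
        destruct (Nat.eq_dec j r) as [->|Hjr].
        -- fold sr. field. auto.
        -- set (j0 := if Nat.eq_dec j m then r else j).
           assert (Hj0 : (j0 < m)%nat) by (unfold j0; destruct (Nat.eq_dec j m); lia).
           assert (Hrm : rm j0 = j).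
           { unfold rm, j0. destruct (Nat.eq_dec j m) as [->|Hjm].
             - destruct (Nat.eq_dec r r); [auto|lia].
             - destruct (Nat.eq_dec j r); [lia|auto]. }
           pose proof (Hc' j0 Hj0) as E. unfold B in E. rewrite Hrm in E.
           rewrite (sum_eq _ (fun i => A j i * c' i - (A j (S m) / A r (S m)) * (A r i * c' i))) in E
             by (intros; ring).
           rewrite minus_sum in E.
           rewrite (sum_eq (fun i => (A j (S m) / A r (S m)) * (A r i * c' i))
                           (fun i => (A r i * c' i) * (A j (S m) / A r (S m)))) in E
             by (intros; ring).
           rewrite <- scal_sum in E. fold sr in E.
           assert (E2 : sum_f_R0 (fun i => A j i * c' i) m = A j (S m) / A r (S m) * sr) by lra.
           rewrite E2. field. auto.
    + exists (fun i => if Nat.eq_dec i (S m) then 1 else 0). split.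
      * exists (S m). split; auto. destruct (Nat.eq_dec (S m) (S m)); [lra|lia].
      * intros j Hj. rewrite tech5. cbv beta.
        rewrite (sum_eq _ (fun _ => 0)).
        2:{ intros i Hi. destruct (Nat.eq_dec i (S m)); [lia|ring]. }
        rewrite sum_zero. destruct (Nat.eq_dec (S m) (S m)); [|lia].
        assert (A j (S m) = 0).
        { apply NNPP. intros Hne. apply Hno. exists j. auto. }
        rewrite H. ring.
Qed.


Lemma le_eps (a b : R) : (forall eps, 0 < eps -> a <= b + eps) -> a <= b.
Proof.
  intros H. destruct (Rle_or_lt a b) as [|Hlt]; auto.
  specialize (H ((a - b) / 2)). lra.
Qed.

Definition infE {X : BanachSpace} (S : X -> Prop) (f : X -> R) (x : X) : R -> Prop :=
  fun r => exists v, S v /\ r = - (Rabs (f v) + vnorm (vsub x v)).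

Lemma infE_bound {X : BanachSpace} (S : X -> Prop) f x : bound (infE S f x).
Proof.
  exists 0. intros r [v [_ ->]].
  pose proof (Rabs_pos (f v)); pose proof (vnorm_nonneg (vsub x v)); lra.
Qed.

Definition infS {X : BanachSpace} (S : X -> Prop) (f : X -> R) (x : X) : R :=
  match excluded_middle_informative (exists r, infE S f x r) with
  | left H => - proj1_sig (completeness (infE S f x) (infE_bound S f x) H)
  | right _ => 0
  end.

Lemma infS_spec {X : BanachSpace} (S : X -> Prop) f x : S vzero ->
  (forall v, S v -> infS S f x <= Rabs (f v) + vnorm (vsub x v)) /\
  (forall b, (forall v, S v -> b <= Rabs (f v) + vnorm (vsub x v)) -> b <= infS S f x).
Proof.
  intros H0. unfold infS. destruct excluded_middle_informative as [H|H].
  - destruct completeness as [c [Hub Hl]]. simpl. split.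
    + intros v Hv. assert (- (Rabs (f v) + vnorm (vsub x v)) <= c) by (apply Hub; exists v; split; auto). lra.
    + intros b Hb. assert (c <= - b); [|lra]. apply Hl. intros r [v [Hv ->]].
      specialize (Hb v Hv). lra.
  - exfalso. apply H. eexists. exists vzero. split; eauto.
Qed.

Lemma inf_le {X : BanachSpace} (S : X -> Prop) f x v : S vzero -> S v ->
  infS S f x <= Rabs (f v) + vnorm (vsub x v).
Proof. intros H0 Hv. apply (infS_spec S f x H0); auto. Qed.

Lemma inf_ge {X : BanachSpace} (S : X -> Prop) f x b : S vzero ->
  (forall v, S v -> b <= Rabs (f v) + vnorm (vsub x v)) -> b <= infS S f x.
Proof. intros H0 Hb. apply (infS_spec S f x H0); auto. Qed.

Lemma inf_nonneg {X : BanachSpace} (S : X -> Prop) f x : S vzero -> 0 <= infS S f x.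
Proof.
  intros H0. apply inf_ge; auto. intros v _.
  pose proof (Rabs_pos (f v)); pose proof (vnorm_nonneg (vsub x v)); lra.
Qed.

Lemma inf_approx {X : BanachSpace} (S : X -> Prop) f x eps : S vzero -> 0 < eps ->
  exists v, S v /\ Rabs (f v) + vnorm (vsub x v) < infS S f x + eps.
Proof.
  intros H0 He. apply NNPP. intros Hn.
  assert (infS S f x + eps <= infS S f x); [|lra].
  apply inf_ge; auto. intros v Hv. apply Rnot_lt_le. intros Hlt. apply Hn. eauto.
Qed.

Lemma inf_lip {X : BanachSpace} (S : X -> Prop) f x y : S vzero ->
  infS S f x <= infS S f y + vnorm (vsub x y).
Proof.
  intros H0. assert (infS S f x - vnorm (vsub x y) <= infS S f y); [|lra].
  apply inf_ge; auto. intros v Hv.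
  pose proof (inf_le S f x v H0 Hv). pose proof (norm_sub_tri x y v). lra.
Qed.

Lemma inf_le_norm {X : BanachSpace} (S : X -> Prop) f x : subsp S -> lin_on S f ->
  infS S f x <= vnorm x.
Proof.
  intros HS Hl. pose proof HS as [H0 _].
  pose proof (inf_le S f x vzero H0 H0) as A. rewrite (lin_0 S f HS Hl), Rabs_R0, vsub_0r in A. lra.
Qed.

Lemma inf_ker {X : BanachSpace} (S : X -> Prop) f y : S vzero -> S y -> f y = 0 ->
  infS S f y <= 0.
Proof.
  intros H0 Hy Hf. pose proof (inf_le S f y y H0 Hy) as A.
  rewrite Hf, Rabs_R0, vsub_self, vnorm_0 in A. lra.
Qed.

Lemma inf_convex {X : BanachSpace} (S : X -> Prop) f x y t : subsp S -> lin_on S f -> 0 <= t <= 1 ->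
  infS S f (vadd (vscal t x) (vscal (1 - t) y)) <= t * infS S f x + (1 - t) * infS S f y.
Proof.
  intros HS Hl Ht. pose proof HS as [H0 [Ha Hs]]. apply le_eps. intros eps He.
  destruct (inf_approx S f x eps H0 He) as [v [Hv Av]].
  destruct (inf_approx S f y eps H0 He) as [w [Hw Aw]].
  set (u := vadd (vscal t v) (vscal (1 - t) w)).
  assert (Hu : S u) by (unfold u; auto).
  pose proof (inf_le S f (vadd (vscal t x) (vscal (1 - t) y)) u H0 Hu) as A.
  assert (Ef : f u = t * f v + (1 - t) * f w).
  { unfold u. destruct Hl as [Hla Hls]. rewrite Hla, !Hls; auto. }
  assert (Ev : vsub (vadd (vscal t x) (vscal (1 - t) y)) u =
               vadd (vscal t (vsub x v)) (vscal (1 - t) (vsub y w))).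
  { unfold u. rewrite vsub_add, !vsub_scal. reflexivity. }
  rewrite Ev, Ef in A.
  pose proof (norm_convex t (1 - t) (vsub x v) (vsub y w) ltac:(lra) ltac:(lra)) as N.
  assert (Rabs (t * f v + (1 - t) * f w) <= t * Rabs (f v) + (1 - t) * Rabs (f w)).
  { eapply Rle_trans; [apply Rabs_triang|]. rewrite !Rabs_mult, !(Rabs_pos_eq t), (Rabs_pos_eq (1 - t)) by lra.
    lra. }
  assert (t * (Rabs (f v) + vnorm (vsub x v)) <= t * (infS S f x + eps)) by
    (apply Rmult_le_compat_l; lra).
  assert ((1 - t) * (Rabs (f w) + vnorm (vsub y w)) <= (1 - t) * (infS S f y + eps)) by
    (apply Rmult_le_compat_l; lra).
  nra.
Qed.

Lemma inf_lower {X : BanachSpace} (S : X -> Prop) f d x : subsp S -> lin_on S f -> bnd_on S f ->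
  S d -> f d = vnorm d -> vnorm d - vnorm (vsub d x) <= infS S f x.
Proof.
  intros HS Hl Hb Hd Hfd. pose proof HS as [H0 _]. apply inf_ge; auto. intros v Hv.
  pose proof (abs_bnd S f (vsub d v) HS Hl Hb (subsp_sub S d v HS Hd Hv)) as A.
  rewrite (lin_sub S f d v HS Hl Hd Hv) in A.
  pose proof (norm_sub_tri d x v).
  pose proof (Rle_abs (f d - f v)). pose proof (Rle_abs (f v)). lra.
Qed.


Lemma lin_comb_in {X : BanachSpace} (M : X -> Prop) c v n : subsp M -> (forall i, M (v i)) ->
  M (lin_comb X c v n).
Proof.
  intros [H0 [Ha Hs]] Hv. induction n; simpl; auto.
Qed.

Lemma lin_comb_apply {X : BanachSpace} (M : X -> Prop) f c v n : subsp M -> lin_on M f ->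
  (forall i, M (v i)) -> f (lin_comb X c v (S n)) = sum_f_R0 (fun i => f (v i) * c i) n.
Proof.
  intros HS Hl Hv. pose proof HS as [H0 [Ha Hs]]. pose proof Hl as [Hla Hls].
  induction n.
  - simpl. rewrite Hla, Hls, (lin_0 M f HS Hl); auto. ring.
  - change (lin_comb X c v (S (S n))) with (vadd (lin_comb X c v (S n)) (vscal (c (S n)) (v (S n)))).
    rewrite Hla, Hls, IHn; auto. 2: apply lin_comb_in; auto.
    rewrite tech5. ring.
Qed.

Lemma kernel_vec {X : BanachSpace} (M : X -> Prop) (phi : nat -> X -> R) (w : nat -> X) N :
  subsp M -> (forall n, lin_on M (phi n)) -> (forall i, M (w i)) ->
  (forall c : nat -> R, lin_comb X c w (S N) = vzero -> forall i, (i < S N)%nat -> c i = 0) ->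
  exists y, M y /\ y <> vzero /\ forall n, (n < N)%nat -> phi n y = 0.
Proof.
  intros HS Hl Hw Hind.
  destruct (homog N (fun j i => phi j (w i))) as [c [[i0 [Hi0 Hc0]] Hc]].
  exists (lin_comb X c w (S N)). split; [|split].
  - apply lin_comb_in; auto.
  - intros E. apply Hc0. apply (Hind c E). lia.
  - intros n Hn. rewrite (lin_comb_apply M); auto.
Qed.

Lemma IZR_split (z : Z) : IZR z = INR (Z.to_nat z) - INR (Z.to_nat (- z)).
Proof.
  rewrite !INR_IZR_INZ. destruct (Z.le_ge_cases 0 z).
  - assert (E1 : Z.of_nat (Z.to_nat z) = z) by lia.
    assert (E2 : Z.of_nat (Z.to_nat (- z)) = 0%Z) by lia.
    rewrite E1, E2. simpl. ring.
  - assert (E1 : Z.of_nat (Z.to_nat z) = 0%Z) by lia.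
    assert (E2 : Z.of_nat (Z.to_nat (- z)) = (- z)%Z) by lia.
    rewrite E1, E2, opp_IZR. simpl. ring.
Qed.

Lemma arch (eta : R) : 0 < eta -> exists N, / INR (S N) < eta.
Proof.
  intros He. destruct (archimed (/ eta)) as [A1 A2].
  assert (Hinv : 0 < / eta) by (apply Rinv_0_lt_compat; auto).
  assert (Hu : (0 < up (/ eta))%Z) by (apply lt_0_IZR; lra).
  exists (Z.to_nat (up (/ eta))).
  assert (E : INR (S (Z.to_nat (up (/ eta)))) = IZR (up (/ eta)) + 1).
  { rewrite S_INR, INR_IZR_INZ. f_equal. f_equal. lia. }
  rewrite E. rewrite <- (Rinv_inv eta) at 2.
  apply Rinv_lt_contravar. apply Rmult_lt_0_compat; lra. lra.
Qed.

Lemma rat_approx (a eta : R) : 0 < eta ->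
  exists p q s, Rabs (a - (INR p - INR q) / INR (S s)) < eta.
Proof.
  intros He. destruct (arch eta He) as [s Hs].
  set (n := INR (S s)). assert (Hn : 0 < n) by (apply lt_0_INR; lia).
  destruct (archimed (a * n)) as [A1 A2].
  exists (Z.to_nat (up (a * n))), (Z.to_nat (- up (a * n))), s.
  rewrite <- IZR_split. fold n. set (t := IZR (up (a * n))) in *.
  assert (E : a - t / n = (a * n - t) * / n) by (field; lra).
  rewrite E, Rabs_mult, (Rabs_pos_eq (/ n)) by (apply Rlt_le, Rinv_0_lt_compat; auto).
  rewrite Rabs_left1 by lra.
  assert (Hi : 0 < / n) by (apply Rinv_0_lt_compat; auto).
  apply Rle_lt_trans with (1 * / n); [|fold n in Hs; lra].
  apply Rmult_le_compat_r; lra.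
Qed.

Fixpoint dec {X : BanachSpace} (gen : nat -> X) (f n : nat) : X :=
  match f with
  | O => vzero
  | S f' =>
    match of_nat n with
    | (O, r) => gen r
    | (S O, r) => let (a, b) := of_nat r in vadd (dec gen f' a) (dec gen f' b)
    | (S (S s), r) =>
      let (a, b) := of_nat r in
      let (p, q) := of_nat a in
      vscal ((INR p - INR q) / INR (S s)) (dec gen f' b)
    end
  end.

Definition Rep {X : BanachSpace} (gen : nat -> X) (x : X) : Prop :=
  exists n f0, forall f, (f0 <= f)%nat -> dec gen f n = x.

Lemma dec_V {X : BanachSpace} (gen : nat -> X) f n : Vspan gen (dec gen f n).
Proof.
  revert n. induction f; intros n; simpl. constructor.
  destruct (of_nat n) as [[|[|s]] r].
  - constructor.
  - destruct (of_nat r). constructor; auto.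
  - destruct (of_nat r) as [a b]. destruct (of_nat a). constructor; auto.
Qed.

Lemma Rep_gen {X : BanachSpace} (gen : nat -> X) r : Rep gen (gen r).
Proof.
  exists (to_nat (O, r)), (S O). intros f Hf. destruct f; [lia|].
  cbn [dec]. rewrite cancel_of_to. reflexivity.
Qed.

Lemma Rep_add {X : BanachSpace} (gen : nat -> X) x y : Rep gen x -> Rep gen y -> Rep gen (vadd x y).
Proof.
  intros [a [fa Ha]] [b [fb Hb]]. exists (to_nat (S O, to_nat (a, b))), (S (max fa fb)).
  intros f Hf. destruct f; [lia|]. cbn [dec]. rewrite !cancel_of_to.
  rewrite Ha, Hb by lia. reflexivity.
Qed.

Lemma Rep_scal {X : BanachSpace} (gen : nat -> X) x p q s : Rep gen x ->
  Rep gen (vscal ((INR p - INR q) / INR (S s)) x).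
Proof.
  intros [b [fb Hb]]. exists (to_nat (S (S s), to_nat (to_nat (p, q), b))), (S fb).
  intros f Hf. destruct f; [lia|]. cbn [dec]. rewrite !cancel_of_to.
  rewrite Hb by lia. reflexivity.
Qed.

Definition Dseq {X : BanachSpace} (gen : nat -> X) (n : nat) : X :=
  dec gen (fst (of_nat n)) (snd (of_nat n)).

Lemma Rep_D {X : BanachSpace} (gen : nat -> X) x : Rep gen x -> exists n, Dseq gen n = x.
Proof.
  intros [m [f0 H]]. exists (to_nat (f0, m)). unfold Dseq. rewrite cancel_of_to. simpl. auto.
Qed.

Lemma dense_rep {X : BanachSpace} (gen : nat -> X) x : Vspan gen x ->
  forall eps, 0 < eps -> exists y, Rep gen y /\ vnorm (vsub x y) < eps.
Proof.
  induction 1; intros eps He.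
  - exists (vscal ((INR 0 - INR 0) / INR 1) (gen O)). split.
    + apply Rep_scal, Rep_gen.
    + replace ((INR 0 - INR 0) / INR 1) with 0 by (simpl; field).
      rewrite vscal_0l, vsub_self, vnorm_0. auto.
  - exists (gen j). split; [apply Rep_gen|]. rewrite vsub_self, vnorm_0. auto.
  - destruct (IHVspan1 (eps / 2)) as [y1 [R1 N1]]; [lra|].
    destruct (IHVspan2 (eps / 2)) as [y2 [R2 N2]]; [lra|].
    exists (vadd y1 y2). split; [apply Rep_add; auto|].
    rewrite vsub_add. eapply Rle_lt_trans; [apply vnorm_triangle|]. lra.
  - assert (Ha1 : 0 < Rabs a + 1) by (pose proof (Rabs_pos a); lra).
    destruct (IHVspan (eps / (2 * (Rabs a + 1)))) as [r [Rr Nr]].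
    { apply Rdiv_lt_0_compat; lra. }
    assert (Hr1 : 0 < vnorm r + 1) by (pose proof (vnorm_nonneg r); lra).
    destruct (rat_approx a (eps / (2 * (vnorm r + 1)))) as [p [q [s Hq]]].
    { apply Rdiv_lt_0_compat; lra. }
    set (qq := (INR p - INR q) / INR (S s)) in *.
    exists (vscal qq r). split; [apply Rep_scal; auto|].
    rewrite vsub_scal_diff. eapply Rle_lt_trans; [apply vnorm_triangle|].
    rewrite !vnorm_scal.
    assert (T1 : Rabs a * vnorm (vsub x r) < eps / 2).
    { apply Rle_lt_trans with ((Rabs a + 1) * vnorm (vsub x r)).
      - pose proof (vnorm_nonneg (vsub x r)). nra.
      - replace (eps / 2) with ((Rabs a + 1) * (eps / (2 * (Rabs a + 1)))) by (field; lra).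
        apply Rmult_lt_compat_l; auto. }
    assert (T2 : Rabs (a - qq) * vnorm r < eps / 2).
    { apply Rle_lt_trans with (Rabs (a - qq) * (vnorm r + 1)).
      - pose proof (Rabs_pos (a - qq)). nra.
      - replace (eps / 2) with ((eps / (2 * (vnorm r + 1))) * (vnorm r + 1)) by (field; lra).
        apply Rmult_lt_compat_r; auto. }
    lra.
Qed.


Lemma kbound n : 0 < / INR (S (S n)) /\ / INR (S (S n)) <= 1.
Proof.
  assert (H : 1 <= INR (S (S n))) by (rewrite <- INR_1; apply le_INR; lia).
  split. apply Rinv_0_lt_compat; lra.
  apply Rle_trans with (/ 1); [apply Rinv_le_contravar; lra|rewrite Rinv_1; lra].
Qed.

Lemma kmono n m : (n <= m)%nat -> / INR (S (S m)) <= / INR (S (S n)).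
Proof.
  intros H. apply Rinv_le_contravar. apply lt_0_INR; lia. apply le_INR; lia.
Qed.

Theorem corollary8 (X : BanachSpace) (Hinf : infinite_dimensional X) :
  exists K : X -> Prop,
    is_closed X K /\ is_convex X K /\
    (forall x, K x -> vnorm x < 1) /\
    is_lub (fun r => exists x, K x /\ r = vnorm x) 1.
Proof.
  set (w := fun n => proj1_sig (constructive_indefinite_description _ (Hinf n))).
  assert (Hw : forall n c, lin_comb X c (w n) n = vzero -> forall i, (i < n)%nat -> c i = 0).
  { intros n. unfold w. destruct constructive_indefinite_description as [v Hv]. exact Hv. }
  set (gen := fun j => w (fst (of_nat j)) (snd (of_nat j))).
  assert (Hgen : forall n i, gen (to_nat (n, i)) = w n i).
  { intros n i. unfold gen. rewrite cancel_of_to. reflexivity. }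
  set (V := Vspan gen).
  pose proof (Vspan_subsp gen) as HV. fold V in HV.
  pose proof HV as [HV0 [HVa HVs]].
  assert (Hwin : forall n i, V (w n i)).
  { intros n i. rewrite <- Hgen. constructor. }
  set (phi := fun n => proj1_sig (constructive_indefinite_description _ (HB gen (Dseq gen n)))).
  assert (Hphi : forall n, lin_on V (phi n) /\ bnd_on V (phi n) /\ phi n (Dseq gen n) = vnorm (Dseq gen n)).
  { intros n. unfold phi. destruct constructive_indefinite_description as [f Hf]. exact Hf. }
  set (psi := fun n => infS V (phi n)).
  assert (HD : forall n, V (Dseq gen n)) by (intros; apply dec_V).
  assert (Hdense : forall v, V v -> forall eps, 0 < eps -> exists n, vnorm (vsub v (Dseq gen n)) < eps).
  { intros v Hv eps He. destruct (dense_rep gen v Hv eps He) as [y [Ry Ny]].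
    destruct (Rep_D gen y Ry) as [n <-]. eauto. }
  assert (Htot : forall x, (forall n, psi n x <= 0) -> vnorm x = 0).
  { intros x Hx. apply NNPP. intros Hne.
    assert (Hd : 0 < vnorm x) by (pose proof (vnorm_nonneg x); lra).
    set (dl := vnorm x) in *.
    destruct (inf_approx V (phi O) x (dl / 8) HV0) as [v0 [Hv0 A0]]; [lra|].
    pose proof (Hx O) as P0. unfold psi in P0.
    pose proof (Rabs_pos (phi O v0)).
    assert (He8 : 0 < dl / 8) by lra.
    destruct (Hdense v0 Hv0 (dl / 8) He8) as [n Hn].
    pose proof (norm_sub_tri x v0 (Dseq gen n)) as T.
    destruct (Hphi n) as [Hl [Hb Hn1]].
    pose proof (inf_lower V (phi n) (Dseq gen n) x HV Hl Hb (HD n) Hn1) as L.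
    pose proof (Hx n) as Pn. unfold psi in Pn.
    pose proof (norm_le_sub x (Dseq gen n)).
    rewrite (norm_sub_sym (Dseq gen n) x) in L. unfold dl in *. lra. }
  assert (Hker : forall N, exists u, V u /\ vnorm u = 1 /\ forall n, (n < N)%nat -> phi n u = 0).
  { intros N.
    destruct (kernel_vec V phi (w (S N)) N HV (fun n => proj1 (Hphi n)) (Hwin (S N)) (Hw (S N)))
      as [y [Hy [Hy0 Hyk]]].
    pose proof (vnorm_pos y Hy0) as Hyp.
    exists (vscal (/ vnorm y) y). split; [auto|split].
    - rewrite vnorm_scal, Rabs_pos_eq by (apply Rlt_le, Rinv_0_lt_compat; auto).
      field. lra.
    - intros n Hn. destruct (Hphi n) as [[_ Hls] _]. rewrite Hls, Hyk; auto. ring. }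
  assert (Hpsi0 : forall n x, 0 <= psi n x) by (intros; apply inf_nonneg; auto).
  set (K := fun x => forall n, vnorm x + psi n x * / INR (S (S n)) <= 1).
  assert (Hball : forall x, K x -> vnorm x < 1).
  { intros x Hx. destruct (classic (exists n, 0 < psi n x)) as [[n Hn]|Hn].
    - specialize (Hx n). pose proof (kbound n) as [k1 k2].
      assert (0 < psi n x * / INR (S (S n))) by (apply Rmult_lt_0_compat; auto). lra.
    - rewrite Htot. lra. intros n. apply Rnot_lt_le. intros H. apply Hn. eauto. }
  exists K. split; [|split; [|split]].
  -
    intros u l Hu Hc n. apply le_eps. intros eps He.
    destruct (Hc (eps / 2)) as [N HN]; [lra|].
    specialize (HN N (le_n N)). change (vnorm (vsub (u N) l) < eps / 2) in HN.
    rewrite norm_sub_sym in HN.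
    pose proof (Hu N n) as HuN.
    pose proof (norm_le_sub l (u N)).
    pose proof (inf_lip V (phi n) l (u N) HV0) as Lp. fold (psi n) in Lp.
    pose proof (kbound n) as [k1 k2].
    assert (psi n l * / INR (S (S n)) <= (psi n (u N) + vnorm (vsub l (u N))) * / INR (S (S n)))
      by (apply Rmult_le_compat_r; lra).
    assert (vnorm (vsub l (u N)) * / INR (S (S n)) <= vnorm (vsub l (u N)) * 1)
      by (apply Rmult_le_compat_l; [apply vnorm_nonneg|lra]).
    lra.
  -
    intros x y t Hx Hy Ht n.
    pose proof (norm_convex t (1 - t) x y ltac:(lra) ltac:(lra)) as Nz.
    pose proof (inf_convex V (phi n) x y t HV (proj1 (Hphi n)) Ht) as Cz. fold (psi n) in Cz.
    pose proof (kbound n) as [k1 k2].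
    set (k := / INR (S (S n))) in *.
    specialize (Hx n). specialize (Hy n). fold k in Hx, Hy.
    assert (psi n (vadd (vscal t x) (vscal (1 - t) y)) * k <= (t * psi n x + (1 - t) * psi n y) * k)
      by (apply Rmult_le_compat_r; lra).
    assert (t * (vnorm x + psi n x * k) <= t * 1) by (apply Rmult_le_compat_l; lra).
    assert ((1 - t) * (vnorm y + psi n y * k) <= (1 - t) * 1) by (apply Rmult_le_compat_l; lra).
    nra.
  - exact Hball.
  - split.
    + intros r [x [Hx ->]]. left. apply Hball; auto.
    + intros b Hb. apply Rnot_lt_le. intros Hb1.
      destruct (arch (1 - b)) as [N HN]; [lra|].
      destruct (Hker N) as [u [Hu [Hu1 Huk]]].
      set (t := 1 - / INR (S (S N))).
      pose proof (kbound N) as [k1 k2].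
      assert (HkN : / INR (S (S N)) <= / INR (S N)).
      { apply Rinv_le_contravar. apply lt_0_INR; lia. apply le_INR; lia. }
      assert (Hxn : vnorm (vscal t u) = t).
      { rewrite vnorm_scal, Hu1, Rabs_pos_eq; unfold t; lra. }
      assert (HK : K (vscal t u)).
      { intros n. rewrite Hxn. destruct (lt_dec n N) as [Hn|Hn].
        - assert (psi n (vscal t u) <= 0).
          { apply inf_ker; auto. destruct (Hphi n) as [[_ Hls] _]. rewrite Hls, Huk; auto. ring. }
          pose proof (Hpsi0 n (vscal t u)).
          replace (psi n (vscal t u)) with 0 by lra. unfold t. lra.
        - pose proof (inf_le_norm V (phi n) (vscal t u) HV (proj1 (Hphi n))) as A.
          fold (psi n) in A. rewrite Hxn in A.
          pose proof (kbound n) as [k3 k4].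
          pose proof (kmono N n ltac:(lia)).
          assert (psi n (vscal t u) * / INR (S (S n)) <= 1 * / INR (S (S n)))
            by (apply Rmult_le_compat_r; unfold t in *; lra).
          unfold t in *. lra. }
      assert (t <= b) by (apply Hb; exists (vscal t u); auto).
      unfold t in *. lra.
Qed.
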